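(* Let $R$ be a unital commutative Hausdorff topological $\mathbb Q$-algebra with dense group of units which is locally $k_\omega$, and let $E,F\in\mathrm{TopSMod}^{lko}_R$. Let $U\subset E_\infty$ be DeWitt-open and let $f:U\to F^\infty$ be even and Tuynman-$\mathcal C^2$. Then $f_R=f|_{U_R}:U_R\to F$ is $\mathcal C^1$ over $R$, and there exists a DeWitt-continuous extension $f^{(1)}:U\times E^\infty\to F^\infty$ of $df_R$ such that for every $x\in U$ the map $f^{(1)}(x)=f^{(1)}(x,\cdot)$ is even and $\lambda^\infty$-linear and $$f(x+a)-f(x)=f^{(1)}(x)(a)\quad\text{for all }x\in U,\ p\ge1,\ a\in\underline E(\lambda^\infty\theta_p).$$
   Context: $\lambda^n=R[\theta_1,\dots,\theta_n]$, $\lambda^\infty=R[\theta_i:i\in\mathbb N]$ Grassmann algebras on odd generators ($\lambda^n=\bigoplus_IR\theta_I$ product topology, $\lambda^\infty$ direct limit topology); $\varepsilon:\lambda\to R$ kills all $\theta_i$, $\lambda^+=\ker\varepsilon$. For a Hausdorff graded topological $R$-module $E=E_0\oplus E_1$: $E\otimes\lambda^N=\prod_{|I|\le N}E\theta_I$ (product topology), $E^\infty=E\otimes\lambda^\infty=\varinjlim_NE\otimes\lambda^N$ in Top, $E_\infty=(E\otimes\lambda^\infty)_0$, $\underline E(\lambda^\infty\theta_p)=(E\otimes\lambda^\infty\theta_p)_0$. $\mathrm{TopSMod}^{lko}_R$: such $E$ that are locally $k_\omega$ (Hausdorff, every point has an open neighbourhood which is a topological direct limit of an increasing sequence of compact subsets).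 DeWitt topology on $E^\infty$ (resp. $E_\infty$): coarsest topology making $\mathrm{id}\otimes\varepsilon$ to $E$ (resp. $E_0$) continuous. A map $g:V\to F^\infty$ with $V\subset E_\infty$ is even if $g(V)\subset F_\infty$. $\mathcal C^1$ over $R$ is in the Bertram–Glöckner–Neeb sense ($g(x+tv)-g(x)=t\,g^{[1]}(x,v,t)$ with $g^{[1]}$ continuous on $\{(x,v,t):x,x+tv\in V,t\in R\}$; $dg(x)v=g^{[1]}(x,v,0)$). Tuynman-$\mathcal C^k$: a subset $V\subset E^\infty$ is nilsaturated if $x+n\in V$ for all $x\in V$, $n\in N_V=\langle V\rangle_R\cap(E\otimes\lambda^{\infty+})$ ($\langle V\rangle_R$ the $R$-linear span); then $V=V_R+N_V$ with $V_R=V\cap E$ (DeWitt-open subsets of $E_\infty$ are nilsaturated). A map $g:V\to F^\infty$ is grounded if $g(V_R)\subset F$. For nilsaturated $V$, $V^{[1]}=\{(x,v,t)\in V\times E^\infty\times\lambda^\infty:x+vt\in V\}$ is nilsaturated in $E^\infty\times E^\infty\times\lambda^\infty=(E\times E\times R)\otimes\lambda^\infty$. A grounded, DeWitt-continuous $g:V\to F^\infty$ is Tuynman-$\mathcal C^1$ if there is a grounded, DeWitt-continuous $g^{[1]}:V^{[1]}\to F^\infty$ with $g(x+vt)-g(x)=g^{[1]}(x,v,t)\cdot t$ for all $(x,v,t)\in V^{[1]}$; it is Tuynman-$\mathcal C^{k+1}$ if in addition $g^{[1]}$ is Tuynman-$\mathcal C^k$. *)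

(* Defs.v *)
From HB Require Import structures.
From mathcomp Require Import all_boot all_order all_algebra finmap.
From mathcomp Require Import all_classical all_reals topology.

Set Implicit Arguments.
Unset Strict Implicit.
Unset Printing Implicit Defensive.

Import GRing.Theory.
Local Open Scope classical_set_scope.
Local Open Scope ring_scope.


(** * Topological algebraic carriers (no continuity axioms: these are
      stated separately as predicates) *)
HB.structure Definition TopNmod := {M of GRing.Nmodule M & Topological M}.
HB.structure Definition TopZmod := {M of GRing.Zmodule M & Topological M}.
HB.structure Definition TopLmod (R : pzRingType) :=
  {M of GRing.Lmodule R M & Topological M}.
HB.structure Definition TopComUnitRing :=
  {R of GRing.ComUnitRing R & Topological R}.
HB.saturate prod.

Definition topological_ring (R : TopComUnitRing.type) : Prop :=
  [/\ continuous (fun p : R * R => p.1 + p.2),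
      continuous (fun x : R => - x) &
      continuous (fun p : R * R => p.1 * p.2)].

Definition topological_module (R : TopComUnitRing.type) (M : TopLmod.type R) : Prop :=
  [/\ continuous (fun p : M * M => p.1 + p.2),
      continuous (fun x : M => - x) &
      continuous (fun p : R * M => p.1 *: p.2)].

Definition Q_algebra (R : comUnitRingType) : Prop :=
  forall n : nat, (0 < n)%N -> (n%:R : R) \is a GRing.unit.

Definition dense_units (R : TopComUnitRing.type) : Prop :=
  forall O : set R, open O -> O !=set0 ->
    exists2 u : R, O u & u \is a GRing.unit.

(** locally k_omega: Hausdorff, and every point has an open neighbourhood
    which is the topological direct limit of an increasing sequence of
    compact subsets *)
Definition locally_komega (T : topologicalType) : Prop :=
  hausdorff_space T /\
  forall x : T, exists W : set T, [/\ open W, W x &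
    exists K : nat -> set T,
      [/\ (forall n, compact (K n)),
          (forall n, K n `<=` K n.+1),
          W = \bigcup_n K n &
          (forall A : set T, A `<=` W ->
             (forall n, exists O : set T, open O /\ A `&` K n = O `&` K n) ->
             open A)]].

(** * Grassmann algebra lambda^infty and E (x) lambda^infty
    Generator theta_(i+1) is indexed by i : nat; a monomial theta_I is
    indexed by I : {fset nat} (with increasing order of factors). *)

(** number of inversions i in I, j in J, j < i : theta_I theta_J =
    (-1)^(inv I J) theta_(I u J) when I, J are disjoint *)
Definition inv_count (I J : {fset nat}) : nat :=
  \sum_(i <- I) count (fun j => (j < i)%N) J.

(** elements of lambda^infty and of E (x) lambda^infty, as coefficient
    functions (finite support is imposed separately by [fin_supp]) *)
Notation Lam R := ({fset nat} -> R) (only parsing).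
Notation Sinf M := ({fset nat} -> M) (only parsing).

Definition fin_supp (V : Type) (z : V) (x : {fset nat} -> V) : Prop :=
  exists N : nat, forall I : {fset nat},
    (exists2 i, i \in I & (N <= i)%N) -> x I = z.

Definition lam_fin (R : pzRingType) (t : Lam R) := fin_supp 0 t.
Definition sup_fin (R : pzRingType) (M : lmodType R) (x : Sinf M) := fin_supp 0 x.

Definition lam_mul (R : pzRingType) (t s : Lam R) : Lam R := fun K =>
  \sum_(I <- fpowerset K) (-1) ^+ inv_count I ((K `\` I)%fset) * t I * s ((K `\` I)%fset).

(** right action of lambda^infty on E (x) lambda^infty:
    (e theta_I) . (r theta_J) = (r e) theta_I theta_J *)
Definition sup_act (R : pzRingType) (M : lmodType R) (x : Sinf M) (t : Lam R)
  : Sinf M := fun K =>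
  \sum_(I <- fpowerset K) ((-1) ^+ inv_count I ((K `\` I)%fset) * t ((K `\` I)%fset)) *: x I.

Definition sup_add (R : pzRingType) (M : lmodType R) (x y : Sinf M) : Sinf M :=
  fun I => x I + y I.
Definition sup_sub (R : pzRingType) (M : lmodType R) (x y : Sinf M) : Sinf M :=
  fun I => x I - y I.

Definition sup_body (R : pzRingType) (M : lmodType R) (x : Sinf M) : M := x fset0.
Definition sup_emb (R : pzRingType) (M : lmodType R) (e : M) : Sinf M :=
  fun I => if I == fset0 then e else 0.
Definition sup_ground (R : pzRingType) (M : lmodType R) (x : Sinf M) : Prop :=
  forall I : {fset nat}, I != fset0 -> x I = 0.
Definition lam_ground (R : pzRingType) (t : Lam R) : Prop :=
  forall I : {fset nat}, I != fset0 -> t I = 0.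

(** the generator theta_(p+1) *)
Definition theta (R : pzRingType) (p : nat) : Lam R :=
  fun I => if I == [fset p]%fset then 1 else 0.

(** even elements of (E0 x E1) (x) lambda^infty (finite support is
    imposed separately): coefficient of theta_I lies in E_(|I| mod 2) *)
Definition sup_even (R : pzRingType) (M0 M1 : lmodType R) (x : Sinf (M0 * M1)%type)
  : Prop :=
  forall I : {fset nat}, if odd #|` I| then (x I).1 = 0 else (x I).2 = 0.

(** * Abstract "super space" data used to define Tuynman-C^k recursively:
    a carrier (standing for (E1 x ... x En) (x) lambda^infty), its body map
    into a topological space, addition, right lambda-action, the grounded
    elements and the finitely supported elements. *)
Record sspace (R : TopComUnitRing.type) := SSpace {
  scar : choiceType;
  sbt : topologicalType;
  sbody : scar -> sbt;
  sadd : scar -> scar -> scar;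
  sact : scar -> Lam R -> scar;
  sground : set scar;
  sfin : set scar }.

Definition sspE (R : TopComUnitRing.type) (M : TopLmod.type R) : sspace R :=
  @SSpace R ({fset nat} -> M : choiceType) M (@sup_body R M) (@sup_add R M)
    (@sup_act R M) (@sup_ground R M) (@sup_fin R M).

(** (X x X x R) (x) lambda^infty = X^infty x X^infty x lambda^infty *)
Definition sspP3 (R : TopComUnitRing.type) (D : sspace R) : sspace R :=
  @SSpace R (scar D * scar D * ({fset nat} -> R : choiceType))%type
    (sbt D * sbt D * R)%type
    (fun y => (sbody y.1.1, sbody y.1.2, y.2 fset0))
    (fun y z => (sadd y.1.1 z.1.1, sadd y.1.2 z.1.2, fun I => y.2 I + z.2 I))
    (fun y t => (sact y.1.1 t, sact y.1.2 t, lam_mul y.2 t))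
    (fun y => [/\ sground y.1.1, sground y.1.2 & lam_ground y.2])
    (fun y => [/\ sfin y.1.1, sfin y.1.2 & lam_fin y.2]).

Definition V1 (R : TopComUnitRing.type) (D : sspace R) (V : set (scar D))
  : set (scar (sspP3 D)) :=
  fun y => [/\ V y.1.1, sfin y.1.2, lam_fin y.2 & V (sadd y.1.1 (sact y.1.2 y.2))].

(** DeWitt topology = initial topology of the body map *)
Definition DeWitt_continuous (R : TopComUnitRing.type) (D : sspace R)
  (F : TopLmod.type R) (V : set (scar D)) (g : scar D -> Sinf F) : Prop :=
  {within (V : set (initial_topology (@sbody R D))),
     continuous (g : initial_topology (@sbody R D) ->
                     initial_topology (@sup_body R F))}.

Fixpoint TuynmanC (R : TopComUnitRing.type) (F : TopLmod.type R) (k : nat)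
  (D : sspace R) (V : set (scar D)) (g : scar D -> Sinf F) {struct k} : Prop :=
  [/\ (forall x, V x -> sup_fin (g x)),
      (forall x, V x -> @sground R D x -> sup_ground (g x)),
      DeWitt_continuous V g &
      match k with
      | 0 => True
      | k'.+1 => exists g1 : scar (sspP3 D) -> Sinf F,
          (forall y, V1 V y ->
             sup_sub (g (sadd y.1.1 (sact y.1.2 y.2))) (g y.1.1)
             = sup_act (g1 y) y.2)
          /\ TuynmanC k' (V1 V) g1
      end].

(** C^1 over R in the Bertram-Gloeckner-Neeb sense, for h : W -> N,
    W subset of M; h1 is the witness f^[1]. *)
Definition BGN_C1_with (R : TopComUnitRing.type) (M N : TopLmod.type R)
  (W : set M) (h : M -> N) (h1 : M * M * R -> N) : Prop :=
  [/\ {within W, continuous h},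
      {within [set y : M * M * R | W y.1.1 /\ W (y.1.1 + y.2 *: y.1.2)],
         continuous h1} &
      forall x v t, W x -> W (x + t *: v) -> h (x + t *: v) - h x = t *: h1 (x, v, t)].

(** body map of M (x) lambda^infty viewed as landing in the topological space M *)
Definition dwbody (R : TopComUnitRing.type) (M : TopLmod.type R) (x : Sinf M) : M :=
  sup_body x.

(** DeWitt continuity for maps defined on subsets of E^infty x E^infty
    (DeWitt topology of (E x E) (x) lambda^infty = product of the DeWitt
    topologies) *)
Definition DeWitt_continuous2 (R : TopComUnitRing.type) (M N : TopLmod.type R)
  (W : set (Sinf M * Sinf M)) (g : Sinf M * Sinf M -> Sinf N) : Prop :=
  {within (W : set (initial_topology (@dwbody R M) * initial_topology (@dwbody R M))%type),
     continuous (g : (initial_topology (@dwbody R M) *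
                      initial_topology (@dwbody R M))%type ->
                     initial_topology (@dwbody R N))}.

(* Main.v *)
Require Import Defs.
From HB Require Import structures.
From mathcomp Require Import all_boot all_order all_algebra finmap.
From mathcomp Require Import all_classical all_reals topology.
From mathcomp Require Import ring.
Import GRing.Theory.
Local Open Scope classical_set_scope.
Local Open Scope ring_scope.

Set Implicit Arguments.
Unset Strict Implicit.
Unset Printing Implicit Defensive.

Definition zl (V : zmodType) : {fset nat} -> V := fun _ => 0.
Arguments zl {V}.
Definition onel (R : pzRingType) : {fset nat} -> R := fun I => if I == fset0 then 1 else 0.
Definition qdiv (V : zmodType) (q : nat) (u : {fset nat} -> V) :=
  forall I, q \notin I -> u I = 0.
Definition bnd (V : zmodType) (N : nat) (x : {fset nat} -> V) :=
  forall I : {fset nat}, (exists2 i, i \in I & (N <= i)%N) -> x I = 0.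

Lemma fin_bnd (V : zmodType) (x : {fset nat} -> V) : fin_supp 0 x <-> exists N, bnd N x.
Proof. by []. Qed.

Lemma bnd_mono (V : zmodType) N N' (x : {fset nat} -> V) : (N <= N')%N -> bnd N x -> bnd N' x.
Proof. by move=> NN' H I [i iI Ni]; apply: H; exists i => //; apply: leq_trans Ni. Qed.

Lemma bnd_zl (V : zmodType) N : bnd N (@zl V). Proof. by []. Qed.

Section Basic.
Variables (R : comPzRingType) (M : lmodType R).
Implicit Types (x y : {fset nat} -> M) (s t u : {fset nat} -> R).

Lemma act_addl x y t : sup_act (sup_add x y) t = sup_add (sup_act x t) (sup_act y t).
Proof.
apply: funext => K; rewrite /sup_act /sup_add -big_split /=.
by apply: eq_bigr => I _; rewrite scalerDr.
Qed.

Lemma act_subl x y t : sup_act (sup_sub x y) t = sup_sub (sup_act x t) (sup_act y t).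
Proof.
apply: funext => K; rewrite /sup_act /sup_sub -sumrB /=.
by apply: eq_bigr => I _; rewrite scalerBr.
Qed.

Lemma act_addr x s t : sup_act x (fun I => s I + t I) = sup_add (sup_act x s) (sup_act x t).
Proof.
apply: funext => K; rewrite /sup_act /sup_add -big_split /=.
by apply: eq_bigr => I _; rewrite mulrDr scalerDl.
Qed.

Lemma act0l t : sup_act (@zl M) t = zl.
Proof. by apply: funext => K; rewrite /sup_act big1 // => I _; rewrite scaler0. Qed.

Lemma act0r x : sup_act x zl = zl.
Proof. by apply: funext => K; rewrite /sup_act big1 // => I _; rewrite /zl mulr0 scale0r. Qed.

Lemma lmul0l u : lam_mul zl u = zl.
Proof. by apply: funext => K; rewrite /lam_mul big1 // => I _; rewrite /zl mulr0 mul0r. Qed.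

Lemma inv_count0l J : inv_count fset0 J = 0%N.
Proof. by rewrite /inv_count big_seq_fset0. Qed.

Lemma lmul1l u : lam_mul (@onel R) u = u.
Proof.
apply: funext => K; rewrite /lam_mul (big_fsetD1 fset0) ?fpowersetE ?fsub0set //=.
rewrite big1_fset ?addr0; last first.
  by move=> I; rewrite !inE => /andP[/negbTE h _] _; rewrite /onel h mulr0 mul0r.
by rewrite /onel eqxx inv_count0l expr0 !mul1r fsetD0.
Qed.

Lemma add_zl x : sup_add x zl = x.
Proof. by apply: funext => K; rewrite /sup_add addr0. Qed.

Lemma zl_addl t : (fun I => zl I + t I) = t.
Proof. by apply: funext => K; rewrite /zl add0r. Qed.

Lemma qdiv_act q x u : qdiv q u -> qdiv q (sup_act x u).
Proof.
move=> Hu K qK; rewrite /sup_act big1_fset // => I _ _.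
by rewrite Hu ?mulr0 ?scale0r // in_fsetD (negbTE qK) andbF.
Qed.

Lemma qdiv_lmul q s u : qdiv q u -> qdiv q (lam_mul s u).
Proof.
move=> Hu K qK; rewrite /lam_mul big1_fset // => I _ _.
by rewrite Hu ?mulr0 // in_fsetD (negbTE qK) andbF.
Qed.

Lemma act_qdiv0 q x u : qdiv q x -> qdiv q u -> sup_act x u = zl.
Proof.
move=> Hx Hu; apply: funext => K; rewrite /sup_act big1_fset // => I _ _.
case: (boolP (q \in I)) => qI.
  by rewrite Hu ?mulr0 ?scale0r // in_fsetD qI.
by rewrite Hx ?scaler0.
Qed.

Lemma theta_qdiv q : qdiv q (theta R q).
Proof.
move=> I qI; rewrite /theta; case: eqP => // E.
by move: qI; rewrite E fset11.
Qed.

Lemma bnd_theta q : bnd q.+1 (theta R q).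
Proof.
move=> I [i iI qi]; rewrite /theta; case: eqP => // E.
by move: iI qi; rewrite E inE => /eqP ->; rewrite ltnn.
Qed.

Lemma bnd_onel : bnd 0 (@onel R).
Proof.
move=> I [i iI _]; rewrite /onel; case: eqP => // E.
by move: iI; rewrite E inE.
Qed.

Lemma bnd_act N1 N2 x t : bnd N1 x -> bnd N2 t -> bnd (maxn N1 N2) (sup_act x t).
Proof.
move=> Hx Ht K [i iK Ni]; rewrite /sup_act big1_fset // => I; rewrite fpowersetE => IK _.
case: (boolP (i \in I)) => iI.
  by rewrite Hx ?scaler0 //; exists i => //; apply: leq_trans Ni; apply: leq_maxl.
rewrite Ht ?mulr0 ?scale0r //; exists i; first by rewrite in_fsetD iI iK.
by apply: leq_trans Ni; apply: leq_maxr.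
Qed.

Lemma bnd_lmul N1 N2 s t : bnd N1 s -> bnd N2 t -> bnd (maxn N1 N2) (lam_mul s t).
Proof.
move=> Hx Ht K [i iK Ni]; rewrite /lam_mul big1_fset // => I; rewrite fpowersetE => IK _.
case: (boolP (i \in I)) => iI.
  by rewrite Hx ?mulr0 ?mul0r //; exists i => //; apply: leq_trans Ni; apply: leq_maxl.
rewrite Ht ?mulr0 //; exists i; first by rewrite in_fsetD iI iK.
by apply: leq_trans Ni; apply: leq_maxr.
Qed.

Lemma bnd_add N1 N2 x y : bnd N1 x -> bnd N2 y -> bnd (maxn N1 N2) (sup_add x y).
Proof.
move=> Hx Hy K [i iK Ni]; rewrite /sup_add Hx ?Hy ?addr0 //; exists i => //.
  exact: leq_trans (leq_maxr _ _) Ni.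
exact: leq_trans (leq_maxl _ _) Ni.
Qed.

Lemma bnd_sub N1 N2 x y : bnd N1 x -> bnd N2 y -> bnd (maxn N1 N2) (sup_sub x y).
Proof.
move=> Hx Hy K [i iK Ni]; rewrite /sup_sub Hx ?Hy ?subr0 //; exists i => //.
  exact: leq_trans (leq_maxr _ _) Ni.
exact: leq_trans (leq_maxl _ _) Ni.
Qed.

Lemma bnd_ladd N1 N2 s t : bnd N1 s -> bnd N2 t -> bnd (maxn N1 N2) (fun I => s I + t I).
Proof.
move=> Hx Hy K [i iK Ni]; rewrite Hx ?Hy ?addr0 //; exists i => //.
  exact: leq_trans (leq_maxr _ _) Ni.
exact: leq_trans (leq_maxl _ _) Ni.
Qed.

Lemma act_theta_ext x q (I : {fset nat}) : q \notin I -> (forall i, i \in I -> (i < q)%N) ->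
  sup_act x (theta R q) (q |` I)%fset = x I.
Proof.
move=> qI lt; rewrite /sup_act (big_fsetD1 I) ?fpowersetE ?fsubsetU1 //=.
have E : ((q |` I) `\` I)%fset = [fset q]%fset.
  apply/fsetP => z; rewrite !inE; case: (eqVneq z q) => [->|] //=.
    by rewrite qI.
  by move=> _; case: (z \in I).
rewrite big1_fset ?addr0; last first.
  move=> J; rewrite !inE fpowersetE => /andP[JI Jsub] _.
  rewrite /theta; case: eqP; last by rewrite mulr0 scale0r.
  move=> H; exfalso; move/negP: JI; apply; apply/eqP/fsetP => z.
  move/fsetP: H => H; have := H z; rewrite !inE.
  case: (eqVneq z q) => [->|zq] /=.
    by move=> _; rewrite (negbTE qI); apply/negbTE/negP => qJ; move: (H q); rewrite !inE eqxx qJ.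
  move=> h; apply/idP/idP => [zJ|zI].
    by have := fsubsetP Jsub z zJ; rewrite !inE (negbTE zq).
  by apply/negPn/negP => zJ; move: h; rewrite zJ zI.
rewrite E /theta eqxx mulr1.
have -> : inv_count I [fset q]%fset = 0%N.
  rewrite /inv_count big1_seq // => i /andP[_ iI].
  apply/eqP; rewrite eqn0Ngt -has_count; apply/hasPn => j; rewrite inE => /eqP ->.
  by rewrite -leqNgt ltnW // lt.
by rewrite expr0 scale1r.
Qed.

Lemma act_theta_cancel x q N : bnd N x -> (N <= q)%N -> sup_act x (theta R q) = zl -> x = zl.
Proof.
move=> Hx Nq H; apply: funext => I.
case: (pselect (exists2 i, i \in I & (N <= i)%N)) => [h|h]; first by rewrite Hx.
have lt : forall i, i \in I -> (i < q)%N.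
  move=> i iI; rewrite ltnNge; apply/negP => qi; apply: h; exists i => //.
  exact: leq_trans Nq qi.
have qI : q \notin I by apply/negP => qI; have := lt q qI; rewrite ltnn.
by rewrite -(act_theta_ext x qI lt) H.
Qed.

End Basic.


Lemma big_fsetU_disj (K : choiceType) (T : Type) (idx : T) (op : Monoid.com_law idx)
  (A B : {fset K}) (F : K -> T) : [disjoint A & B]%fset ->
  \big[op/idx]_(x <- (A `|` B)%fset) F x =
  op (\big[op/idx]_(x <- A) F x) (\big[op/idx]_(x <- B) F x).
Proof.
move=> dAB; rewrite (big_fsetID op (mem A)); congr (op _ _); apply: eq_fbigl => x; rewrite !inE /=.
  by case: (x \in A); rewrite ?orbT ?andbF.
case: (boolP (x \in A)) => xA /=; last by rewrite andbT.
by apply/esym/negbTE; move/fdisjointP: dAB; apply.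
Qed.

Lemma inv_countUl (I A B : {fset nat}) : [disjoint I & A]%fset ->
  inv_count (I `|` A)%fset B = (inv_count I B + inv_count A B)%N.
Proof. by move=> d; rewrite /inv_count big_fsetU_disj. Qed.

Lemma inv_countUr (I A B : {fset nat}) : [disjoint A & B]%fset ->
  inv_count I (A `|` B)%fset = (inv_count I A + inv_count I B)%N.
Proof.
move=> d; rewrite /inv_count -big_split /=; apply: eq_bigr => i _.
by rewrite -!sum1_count !(big_mkcond (fun j => (j < i)%N)) big_fsetU_disj.
Qed.

Lemma eq_fsum (V : nmodType) (I : choiceType) (A : {fset I}) (F G : I -> V) :
  (forall x, x \in A -> F x = G x) -> \sum_(i <- A) F i = \sum_(i <- A) G i.
Proof. by move=> h; apply: eq_fbigr => x xA _; exact: h. Qed.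

Lemma fpow_sub (V : nmodType) (K J : {fset nat}) (G : {fset nat} -> V) : (J `<=` K)%fset ->
  \sum_(I <- fpowerset J) G I = \sum_(I <- fpowerset K) (if (I `<=` J)%fset then G I else 0).
Proof.
move=> JK; rewrite (@eq_fsum _ _ _ _ (fun I => if (I `<=` J)%fset then G I else 0)); last first.
  by move=> I; rewrite fpowersetE => ->.
apply: big_fset_incl; first by rewrite fpowersetS.
by move=> I _; rewrite fpowersetE => /negbTE ->.
Qed.

Lemma fpow_exchange (V : nmodType) (K : {fset nat}) (F : {fset nat} -> {fset nat} -> V) :
  \sum_(J <- fpowerset K) \sum_(I <- fpowerset J) F I J =
  \sum_(I <- fpowerset K) \sum_(A <- fpowerset (K `\` I)%fset) F I (I `|` A)%fset.
Proof.
rewrite (@eq_fsum _ _ _ _ (fun J => \sum_(I <- fpowerset K) (if (I `<=` J)%fset then F I J else 0))); last first.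
  by move=> J; rewrite fpowersetE => JK; rewrite (fpow_sub _ JK).
rewrite exchange_big /=; apply: eq_fsum => I; rewrite fpowersetE => IK.
have inj : {in mem (fpowerset (K `\` I)%fset) &, injective (fun A => (I `|` A)%fset)}.
  move=> A B; rewrite !fpowersetE => AK BK E.
  apply/fsetP => z; move/fsetP: E => E; have := E z; rewrite !inE.
  case: (boolP (z \in I)) => zI /=; last by [].
  have h : forall C : {fset nat}, (C `<=` K `\` I)%fset -> z \notin C.
    by move=> C CK; apply/negP => /(fsubsetP CK); rewrite inE zI.
  by rewrite (negbTE (h _ AK)) (negbTE (h _ BK)).
rewrite -(@big_imfset _ 0 +%R _ _ imfset_key (fun A => (I `|` A)%fset) (mem (fpowerset (K `\` I)%fset)) (F I) inj).
apply/esym; rewrite (@eq_fsum _ _ _ _ (fun J => if (I `<=` J)%fset then F I J else 0)); last first.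
  move=> J /imfsetP [A]; rewrite /= fpowersetE => _ ->.
  by rewrite fsubsetUl.
apply: big_fset_incl.
  apply/fsubsetP => J /imfsetP [A]; rewrite /= fpowersetE => AK ->.
  rewrite fpowersetE fsubUset IK /=; apply: fsubset_trans AK _; exact: fsubsetDl.
move=> J; rewrite fpowersetE => JK JN; case: ifP => // IJ.
exfalso; move/negP: JN; apply; apply/imfsetP; exists (J `\` I)%fset.
  by rewrite /= fpowersetE; apply: fsetSD.
apply/fsetP => z; rewrite !inE; case: (boolP (z \in I)) => zI //=.
by rewrite (fsubsetP IJ).
Qed.

Lemma fdisjointD (A X : {fset nat}) : [disjoint A & (X `\` A)]%fset.
Proof. by apply/fdisjointP => z zA; rewrite in_fsetD zA. Qed.

Lemma fsetU_D (A X : {fset nat}) : (A `<=` X)%fset -> (A `|` (X `\` A))%fset = X.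
Proof.
move=> AX; apply/fsetP => z; rewrite !inE; case: (boolP (z \in A)) => zA //=.
by rewrite (fsubsetP AX).
Qed.

Lemma fsetUK_D (I A : {fset nat}) : [disjoint I & A]%fset -> ((I `|` A) `\` I)%fset = A.
Proof.
move=> d; apply/fsetP => z; rewrite !inE; case: (boolP (z \in I)) => zI //=.
by apply/esym/negbTE; move/fdisjointP: d; apply.
Qed.

Section Assoc.
Variables (R : comPzRingType) (M : lmodType R).

Lemma act_assoc (y : {fset nat} -> M) (s t : {fset nat} -> R) :
  sup_act (sup_act y s) t = sup_act y (lam_mul s t).
Proof.
apply: funext => K; rewrite /sup_act /lam_mul.
rewrite (@eq_fsum _ _ _ _ (fun J => \sum_(I <- fpowerset J)
   (((-1) ^+ inv_count J (K `\` J)%fset * t (K `\` J)%fset) *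
    ((-1) ^+ inv_count I (J `\` I)%fset * s (J `\` I)%fset)) *: y I)); last first.
  by move=> J _; rewrite scaler_sumr; apply: eq_fsum => I _; rewrite scalerA.
rewrite fpow_exchange; apply: eq_fsum => I; rewrite fpowersetE => IK.
rewrite mulr_sumr scaler_suml; apply: eq_fsum => A; rewrite fpowersetE => AK.
have dIA : [disjoint I & A]%fset.
  by rewrite fdisjoint_sym; move: AK; rewrite fsubsetD => /andP[].
have dAB := fdisjointD A (K `\` I)%fset.
have UAB := fsetU_D AK.
rewrite fsetUK_D // -fsetDDl.
set B := ((K `\` I) `\` A)%fset.
rewrite inv_countUl // -UAB inv_countUr // !exprD.
congr (_ *: _); ring.
Qed.

End Assoc.


Section Par.
Variables (R : comPzRingType) (M0 M1 : lmodType R).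
Local Notation V := (M0 * M1)%type.
Implicit Types (x y z : {fset nat} -> V) (s t : {fset nat} -> R).

Definition homog b y := forall I : {fset nat},
  if odd #|` I| (+) b then (y I).1 = 0 else (y I).2 = 0.
Definition lhomog b s := forall I : {fset nat}, odd #|` I| != b -> s I = 0.

Lemma even_homog y : sup_even y <-> homog false y.
Proof. by split => h I; have := h I; rewrite addbF. Qed.

Lemma fst_sum (r : seq {fset nat}) (F : {fset nat} -> V) :
  (\sum_(i <- r) F i).1 = \sum_(i <- r) (F i).1.
Proof. exact: (big_morph (fun p : V => p.1) (fun _ _ => erefl) erefl). Qed.
Lemma snd_sum (r : seq {fset nat}) (F : {fset nat} -> V) :
  (\sum_(i <- r) F i).2 = \sum_(i <- r) (F i).2.
Proof. exact: (big_morph (fun p : V => p.2) (fun _ _ => erefl) erefl). Qed.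
Lemma fst_scale (r : R) (p : V) : (r *: p).1 = r *: p.1. Proof. by []. Qed.
Lemma snd_scale (r : R) (p : V) : (r *: p).2 = r *: p.2. Proof. by []. Qed.

Lemma odd_cardD (I K : {fset nat}) : (I `<=` K)%fset ->
  odd #|` (K `\` I)%fset| = odd #|` K| (+) odd #|` I|.
Proof. by move=> IK; rewrite cardfsDS // oddB // fsubset_leq_card. Qed.

Lemma act_homog b c y s : homog b y -> lhomog c s -> homog (b (+) c) (sup_act y s).
Proof.
move=> Hy Hs K; rewrite /sup_act.
case: ifP => H; [rewrite fst_sum | rewrite snd_sum];
  rewrite big1_fset // => I; rewrite fpowersetE => IK _;
  [rewrite fst_scale | rewrite snd_scale];
  (case: (eqVneq (odd #|` (K `\` I)%fset|) c) => Hc;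
    last by rewrite Hs ?mulr0 ?scale0r);
  have := Hy I; rewrite odd_cardD // in Hc; rewrite -Hc in H;
  clear Hy Hs; move: H; case: (odd #|` I|); case: (odd #|` K|); case: b => //= _ ->;
  by rewrite scaler0.
Qed.

Lemma lhomog_lmul b c s t : lhomog b s -> lhomog c t -> lhomog (b (+) c) (lam_mul s t).
Proof.
move=> Hs Ht K H; rewrite /lam_mul big1_fset // => I; rewrite fpowersetE => IK _.
case: (eqVneq (odd #|` (K `\` I)%fset|) c) => Hc; last by rewrite Ht ?mulr0.
rewrite Hs ?mulr0 ?mul0r //; rewrite odd_cardD // in Hc; rewrite -Hc in H.
by clear Hs Ht; move: H; case: (odd #|` I|); case: (odd #|` K|); case: b.
Qed.

Lemma lhomog_theta q : lhomog true (theta R q).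
Proof.
move=> I H; rewrite /theta; case: eqP => // E.
by move: H; rewrite E cardfs1.
Qed.

Lemma homog_zl b : homog b (@zl V). Proof. by move=> I; case: ifP. Qed.

Lemma homog_add b y z : homog b y -> homog b z -> homog b (sup_add y z).
Proof.
move=> Hy Hz I; have := Hy I; have := Hz I; rewrite /sup_add.
by case: ifP => _ /= -> ->; rewrite addr0.
Qed.

Lemma homog_sub b y z : homog b y -> homog b z -> homog b (sup_sub y z).
Proof.
move=> Hy Hz I; have := Hy I; have := Hz I; rewrite /sup_sub.
by case: ifP => _ /= -> ->; rewrite subr0.
Qed.

Lemma homog_theta_cancel b x q N : bnd N x -> (N <= q)%N ->
  homog b (sup_act x (theta R q)) -> homog (~~ b) x.
Proof.
move=> Hx Nq H I.
case: (pselect (exists2 i, i \in I & (N <= i)%N)) => [h|h].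
  by rewrite Hx //; case: ifP.
have lt : forall i, i \in I -> (i < q)%N.
  move=> i iI; rewrite ltnNge; apply/negP => qi; apply: h; exists i => //.
  exact: leq_trans Nq qi.
have qI : q \notin I by apply/negP => qI; have := lt q qI; rewrite ltnn.
have := H (q |` I)%fset; rewrite act_theta_ext // cardfsU1 qI /=.
by rewrite add0n addNb addbN.
Qed.

Definition ev y : {fset nat} -> V := fun I =>
  if odd #|` I| then (0, (y I).2) else ((y I).1, 0).
Definition od y : {fset nat} -> V := fun I =>
  if odd #|` I| then ((y I).1, 0) else (0, (y I).2).

Lemma ev_homog y : homog false (ev y).
Proof. by move=> I; rewrite addbF /ev; case: (odd #|` I|). Qed.
Lemma od_homog y : homog true (od y).
Proof. by move=> I; rewrite addbT /od; case: (odd #|` I|). Qed.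

Lemma pair_add (a b : M0) (c d : M1) : ((a, c) : V) + (b, d) = (a + b, c + d).
Proof. by []. Qed.

Lemma ev_od y : sup_add (ev y) (od y) = y.
Proof.
apply: funext => I; rewrite /sup_add /ev /od; case: ifP => _;
  rewrite pair_add ?add0r ?addr0 ?add0r; by case: (y I).
Qed.

Lemma ev_id y : homog false y -> ev y = y.
Proof.
move=> H; apply: funext => I; have := H I; rewrite addbF /ev.
by case: (odd #|` I|) => h; case: (y I) h => a c /= ->.
Qed.
Lemma ev0 y : homog true y -> ev y = zl.
Proof.
move=> H; apply: funext => I; have := H I; rewrite addbT /ev /zl.
by case: (odd #|` I|) => /= ->.
Qed.
Lemma od_id y : homog true y -> od y = y.
Proof.
move=> H; apply: funext => I; have := H I; rewrite addbT /od.
by case: (odd #|` I|) => h; case: (y I) h => a c /= ->.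
Qed.
Lemma od0 y : homog false y -> od y = zl.
Proof.
move=> H; apply: funext => I; have := H I; rewrite addbF /od /zl.
by case: (odd #|` I|) => /= ->.
Qed.

Lemma ev_add y z : ev (sup_add y z) = sup_add (ev y) (ev z).
Proof.
apply: funext => I; rewrite /ev /sup_add; case: ifP => _; by rewrite pair_add ?addr0.
Qed.
Lemma od_add y z : od (sup_add y z) = sup_add (od y) (od z).
Proof.
apply: funext => I; rewrite /od /sup_add; case: ifP => _; by rewrite pair_add ?addr0.
Qed.

Lemma bnd_ev N y : bnd N y -> bnd N (ev y).
Proof. by move=> H I h; rewrite /ev H //; case: ifP. Qed.
Lemma bnd_od N y : bnd N y -> bnd N (od y).
Proof. by move=> H I h; rewrite /od H //; case: ifP. Qed.

Definition lev s : {fset nat} -> R := fun I => if odd #|` I| then 0 else s I.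
Definition lod s : {fset nat} -> R := fun I => if odd #|` I| then s I else 0.

Lemma lev_homog s : lhomog false (lev s).
Proof. by move=> I; rewrite /lev; case: ifP. Qed.
Lemma lod_homog s : lhomog true (lod s).
Proof. by move=> I; rewrite /lod; case: ifP. Qed.
Lemma lev_lod s : (fun I => lev s I + lod s I) = s.
Proof. by apply: funext => I; rewrite /lev /lod; case: ifP; rewrite ?add0r ?addr0. Qed.
Lemma bnd_lev N s : bnd N s -> bnd N (lev s).
Proof. by move=> H I h; rewrite /lev H //; case: ifP. Qed.
Lemma bnd_lod N s : bnd N s -> bnd N (lod s).
Proof. by move=> H I h; rewrite /lod H //; case: ifP. Qed.

End Par.


Lemma within_comp (X Y Z : topologicalType) (A : set X) (B : set Y) (phi : X -> Y) (g : Y -> Z) :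
  continuous phi -> (forall x, A x -> B (phi x)) -> {within B, continuous g} ->
  {within A, continuous (g \o phi)}.
Proof.
move=> cphi AB /subspace_continuousP cg; apply/subspace_continuousP => x Ax.
apply: (cvg_comp _ _ _ (cg _ (AB _ Ax))).
move=> S /=; rewrite /within /= => hS.
have := cphi x _ hS; rewrite nbhs_simpl /= => h.
by apply: filterS h => z hz Az; apply: hz; apply: AB.
Qed.

Lemma within_initial_in (Y : choiceType) (X Z : topologicalType) (w : Y -> Z) (A : set X)
  (h : X -> initial_topology w) :
  {within A, continuous (w \o h)} -> {within A, continuous h}.
Proof. by move=> c; apply: (@continuous_comp_initial Y (subspace A) Z w (from_subspace A h)). Qed.

Lemma within_initial_out (Y : choiceType) (X Z : topologicalType) (w : Y -> Z) (A : set X)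
  (h : X -> initial_topology w) :
  {within A, continuous h} -> {within A, continuous (w \o h)}.
Proof. by move=> c x; apply: continuous_comp; [exact: c | exact: initial_continuous]. Qed.

Lemma within_op (X Y : topologicalType) (op : Y -> Y -> Y) (A : set X) (a b : X -> Y) :
  continuous (fun p : Y * Y => op p.1 p.2) ->
  {within A, continuous a} -> {within A, continuous b} ->
  {within A, continuous (fun x => op (a x) (b x))}.
Proof.
move=> cop ca cb x.
apply: (@continuous2_cvg _ _ _ _ _ _ (from_subspace A a) (from_subspace A b) op); [exact: (cop (a x, b x)) | exact: ca | exact: cb].
Qed.


Section UU.
Variables (R : comPzRingType).
Definition uu (b : bool) (q : nat) : {fset nat} -> R :=
  if b then theta R q else lam_mul (theta R q) (theta R q.+1).
Definition qq (b : bool) (q : nat) := if b then q else q.+1.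

Lemma uu_fin b q : lam_fin (uu b q).
Proof.
rewrite /uu; case: b; first by exists q.+1; apply: bnd_theta.
by exists (maxn q.+1 q.+2); apply: bnd_lmul; apply: bnd_theta.
Qed.

Lemma uu_qdiv b q : qdiv (qq b q) (uu b q).
Proof. by rewrite /uu /qq; case: b; [apply: theta_qdiv | apply/qdiv_lmul/theta_qdiv]. Qed.

Lemma uu_homog b q : lhomog b (uu b q).
Proof.
rewrite /uu; case: b; first exact: lhomog_theta.
exact: (lhomog_lmul (lhomog_theta R q) (lhomog_theta R q.+1)).
Qed.

Lemma uu_cancel (M : lmodType R) (Y : {fset nat} -> M) N q b :
  bnd N Y -> (N <= q)%N -> sup_act Y (uu b q) = zl -> Y = zl.
Proof.
move=> HY Nq; rewrite /uu; case: b; first exact: act_theta_cancel HY Nq.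
rewrite -act_assoc => h.
have h1 : sup_act Y (theta R q) = zl.
  apply: (@act_theta_cancel _ _ _ q.+1 (maxn N q.+1)) => //.
    by apply: bnd_act => //; apply: bnd_theta.
  by rewrite geq_max ltnW //= leqnn.
exact: act_theta_cancel HY Nq h1.
Qed.

Lemma uu_parity (M0 M1 : lmodType R) (Y : {fset nat} -> M0 * M1) N q b b' :
  bnd N Y -> (N <= q)%N -> homog b' (sup_act Y (uu b q)) -> homog (b' (+) b) Y.
Proof.
move=> HY Nq; rewrite /uu; case: b => h.
  by rewrite addbT; apply: homog_theta_cancel HY Nq h.
rewrite -act_assoc in h.
have h1 : homog (~~ b') (sup_act Y (theta R q)).
  apply: (@homog_theta_cancel _ _ _ b' _ q.+1 (maxn N q.+1)) => //.
    by apply: bnd_act => //; apply: bnd_theta.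
  by rewrite geq_max ltnW //= leqnn.
by have := homog_theta_cancel HY Nq h1; rewrite negbK addbF.
Qed.

End UU.

Lemma zmod_helper (V : zmodType) (a b c : V) : (a - c) - ((b - c) + (a - b)) = 0.
Proof. by rewrite (addrC (b - c)) (addrA (a - b)) subrK subrr. Qed.

Lemma sfin_bnd (R : pzRingType) (M : lmodType R) N (x : {fset nat} -> M) : bnd N x -> sup_fin x.
Proof. by move=> h; exists N. Qed.
Lemma lfin_bnd (R : pzRingType) N (x : {fset nat} -> R) : bnd N x -> lam_fin x.
Proof. by move=> h; exists N. Qed.
Lemma sfin_zl (R : pzRingType) (M : lmodType R) : sup_fin (@zl M).
Proof. by exists 0. Qed.
Lemma lfin_zl (R : pzRingType) : lam_fin (@zl R).
Proof. by exists 0. Qed.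
Lemma lfin_onel (R : comPzRingType) : lam_fin (@onel R).
Proof. by exists 0; apply: bnd_onel. Qed.

Lemma cont_fst (X Y : topologicalType) : continuous (@fst X Y).
Proof. by move=> z; exact: cvg_fst. Qed.
Lemma cont_snd (X Y : topologicalType) : continuous (@snd X Y).
Proof. by move=> z; exact: cvg_snd. Qed.
Lemma cont_pair (X Y Z : topologicalType) (a : X -> Y) (b : X -> Z) :
  continuous a -> continuous b -> continuous (fun x => (a x, b x)).
Proof. by move=> ca cb x; apply: cvg_pair; [exact: ca | exact: cb]. Qed.
Lemma cont_comp (X Y Z : topologicalType) (a : X -> Y) (b : Y -> Z) :
  continuous a -> continuous b -> continuous (b \o a).
Proof. by move=> ca cb x; apply: continuous_comp; [exact: ca | exact: cb]. Qed.
Lemma cont_cst (X Y : topologicalType) (c : Y) : continuous (fun _ : X => c).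
Proof. by move=> x; exact: cvg_cst. Qed.
Lemma cont_id (X : topologicalType) : continuous (fun x : X => x).
Proof. by move=> x; exact: cvg_id. Qed.

Section Tuyn.
Variables (R : TopComUnitRing.type) (E0 E1 F0 F1 : TopLmod.type R).
Local Notation E := (E0 * E1)%type.
Local Notation F := (F0 * F1)%type.
Variables (U : set ({fset nat} -> E)) (f : ({fset nat} -> E) -> {fset nat} -> F) (O : set E0).
Hypothesis HU : U = [set x | [/\ sup_even x, sup_fin x & O (sup_body x).1]].
Hypothesis fev : forall x, U x -> sup_even (f x).
Variable g1 : scar (sspP3 (sspE E)) -> {fset nat} -> F.
Local Notation V1U := (@V1 R (sspE E) U).
Hypothesis eq1 : forall y : scar (sspP3 (sspE E)), V1U y ->
    sup_sub (f (sadd y.1.1 (sact y.1.2 y.2))) (f y.1.1) = sup_act (g1 y) y.2.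
Hypothesis groundg1 : forall y : scar (sspP3 (sspE E)), V1U y -> sground y -> sup_ground (g1 y).
Hypothesis fing1 : forall y : scar (sspP3 (sspE E)), V1U y -> sup_fin (g1 y).
Variable g2 : scar (sspP3 (sspP3 (sspE E))) -> {fset nat} -> F.
Hypothesis eq2 : forall y : scar (sspP3 (sspP3 (sspE E))), @V1 R (sspP3 (sspE E)) V1U y ->
    sup_sub (g1 (sadd y.1.1 (sact y.1.2 y.2))) (g1 y.1.1) = sup_act (g2 y) y.2.

Definition LL (x v : {fset nat} -> E) : {fset nat} -> F := g1 (x, v, zl).

Lemma U_act b q x v u : U x -> sup_fin v -> lam_fin u -> qdiv q u -> homog b v -> lhomog b u ->
  U (sup_add x (sup_act v u)).
Proof.
rewrite HU => -[ex [N fx] Ox] [N1 fv] [N2 fu] qu hv hu; split.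
- apply/even_homog; apply: homog_add; first exact/even_homog.
  by have := act_homog hv hu; rewrite addbb.
- by exists (maxn N (maxn N1 N2)); apply: bnd_add => //; apply: bnd_act.
- by rewrite /sup_body /sup_add (qdiv_act _ qu) ?inE // addr0.
Qed.

Lemma pw (V : Type) (g h : {fset nat} -> V) I : g = h -> g I = h I.
Proof. by move=> ->. Qed.

Lemma G2 q (y : scar (sspP3 (sspE E))) (w : scar (sspP3 (sspE E))) (s : {fset nat} -> R) :
  V1U y -> sup_fin w.1.1 -> sup_fin w.1.2 -> lam_fin w.2 -> lam_fin s -> qdiv q s ->
  V1U (sup_add y.1.1 (sup_act w.1.1 s), sup_add y.1.2 (sup_act w.1.2 s),
        fun I => y.2 I + lam_mul w.2 s I) ->
  sup_act (g1 (sup_add y.1.1 (sup_act w.1.1 s), sup_add y.1.2 (sup_act w.1.2 s),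
        fun I => y.2 I + lam_mul w.2 s I)) s = sup_act (g1 y) s.
Proof.
move=> Vy f1 f2 f3 fs qs Vz.
have h := eq2 (y := (y, w, s)) (And4 Vy (And3 f1 f2 f3) fs Vz).
have e : g1 (sup_add y.1.1 (sup_act w.1.1 s), sup_add y.1.2 (sup_act w.1.2 s),
        fun I => y.2 I + lam_mul w.2 s I) = sup_add (g1 y) (sup_act (g2 (y, w, s)) s).
  apply: funext => I; have := pw I h; rewrite /sup_sub /sup_add => <-.
  by rewrite addrC subrK.
by rewrite e act_addl (act_qdiv0 (qdiv_act _ qs) qs) add_zl.
Qed.

Lemma Key q x v u : U x -> sup_fin v -> lam_fin u -> qdiv q u ->
  U (sup_add x (sup_act v u)) ->
  sup_sub (f (sup_add x (sup_act v u))) (f x) = sup_act (LL x v) u.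
Proof.
move=> Ux fv fu qu Uxv.
rewrite (eq1 (y := (x, v, u))) //.
have Etup : (sup_add x (sup_act zl u), sup_add v (sup_act zl u),
    fun I => zl I + lam_mul (@onel R) u I) = (x, v, u).
  by rewrite act0l !add_zl lmul1l zl_addl.
have := @G2 q (x, v, zl) (zl, zl, @onel R) u.
rewrite /= Etup => -> //.
- split => //; first exact: lfin_zl.
  by rewrite /= act0r add_zl.
- exact: sfin_zl.
- exact: sfin_zl.
- exact: lfin_onel.
Qed.


Lemma V1_zl x v : U x -> sup_fin v -> V1U (x, v, zl).
Proof. by move=> Ux fv; split => //; [exact: lfin_zl | rewrite /= act0r add_zl]. Qed.

Lemma LL_fin x v : U x -> sup_fin v -> sup_fin (LL x v).
Proof. by move=> Ux fv; apply: fing1; apply: V1_zl. Qed.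

Lemma U_fin x : U x -> sup_fin x.
Proof. by rewrite HU => -[]. Qed.

Lemma LL_homog b x v : U x -> sup_fin v -> homog b v -> homog b (LL x v).
Proof.
move=> Ux fv hv; have [N hN] := LL_fin Ux fv.
have Uxv := U_act Ux fv (@uu_fin R b N) (@uu_qdiv R b N) hv (@uu_homog R b N).
have k := Key Ux fv (@uu_fin R b N) (@uu_qdiv R b N) Uxv.
have he : homog false (sup_act (LL x v) (uu R b N)).
  rewrite -k; apply: homog_sub; apply/even_homog; apply: fev => //.
by have := uu_parity hN (leqnn N) he; rewrite addFb.
Qed.

Lemma LL_add b x v w : U x -> sup_fin v -> sup_fin w -> homog b v -> homog b w ->
  LL x (sup_add v w) = sup_add (LL x v) (LL x w).
Proof.
move=> Ux [Nv fv] [Nw fw] hv hw.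
have fv' : sup_fin v by exists Nv.
have fw' : sup_fin w by exists Nw.
have fvw : sup_fin (sup_add v w) by exists (maxn Nv Nw); apply: bnd_add.
have hvw := homog_add hv hw.
set Y := sup_sub (LL x (sup_add v w)) (sup_add (LL x v) (LL x w)).
have [N hN] : sup_fin Y.
  have [N1 h1] := LL_fin Ux fvw; have [N2 h2] := LL_fin Ux fv'; have [N3 h3] := LL_fin Ux fw'.
  by exists (maxn N1 (maxn N2 N3)); apply: bnd_sub => //; apply: bnd_add.
set u := uu R b N; have fu := @uu_fin R b N; have qu := @uu_qdiv R b N; have hu := @uu_homog R b N.
set x' := sup_add x (sup_act v u).
have Ux' : U x' := U_act Ux fv' fu qu hv hu.
have e1 : sup_add x' (sup_act w u) = sup_add x (sup_act (sup_add v w) u).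
  by apply: funext => I; rewrite /x' act_addl /sup_add addrA.
have Ux'' : U (sup_add x (sup_act (sup_add v w) u)) := U_act Ux fvw fu qu hvw hu.
have k1 := Key Ux fvw fu qu Ux''.
have k3 := Key Ux fv' fu qu Ux'.
have k2 := Key Ux' fw' fu qu (eq_ind_r U Ux'' e1).
rewrite e1 in k2.
have g := @G2 (qq b N) (x, w, zl) (v, zl, zl) u (V1_zl Ux fw') fv' (sfin_zl _) (lfin_zl _) fu qu.
have Etup : (sup_add x (sup_act v u), sup_add w (sup_act zl u), fun I => zl I + lam_mul zl u I)
   = (x', w, zl) by rewrite act0l add_zl lmul0l zl_addl.
rewrite /= Etup in g; have {}g := g (V1_zl Ux' fw').
have hY : sup_act Y u = zl.
  have g' : sup_act (LL x' w) u = sup_act (LL x w) u := g.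
  rewrite /Y act_subl act_addl -k1 -k3 -g' -k2; apply: funext => I; rewrite /sup_sub /sup_add /zl.
  exact: zmod_helper.
have := uu_cancel hN (leqnn N) hY; rewrite /Y => h.
apply: funext => I; have := pw I h; rewrite /sup_sub /zl => /eqP; rewrite subr_eq0 => /eqP.
by [].
Qed.

Lemma LL0 x : U x -> LL x zl = zl.
Proof.
move=> Ux; have h := @LL_add true x zl zl Ux (sfin_zl _) (sfin_zl _) (homog_zl _ _ true) (homog_zl _ _ true).
rewrite add_zl in h; apply: funext => I; have := pw I h; rewrite /sup_add /zl => e.
by apply: (@addrI _ (LL x zl I)); rewrite addr0 -e.
Qed.

Lemma LL_lin b c x v s : U x -> sup_fin v -> homog b v -> lam_fin s -> lhomog c s ->
  LL x (sup_act v s) = sup_act (LL x v) s.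
Proof.
move=> Ux [Nv fv] hv [Ns fs] hs.
have fv' : sup_fin v by exists Nv.
have fs' : lam_fin s by exists Ns.
have fw : sup_fin (sup_act v s) by exists (maxn Nv Ns); apply: bnd_act.
have hw := act_homog hv hs.
set Y := sup_sub (LL x (sup_act v s)) (sup_act (LL x v) s).
have [N hN] : sup_fin Y.
  have [N1 h1] := LL_fin Ux fw; have [N2 h2] := LL_fin Ux fv'.
  by exists (maxn N1 (maxn N2 Ns)); apply: bnd_sub => //; apply: bnd_act.
set u := uu R (b (+) c) N; have fu := @uu_fin R (b (+) c) N; have qu := @uu_qdiv R (b (+) c) N.
have hu := @uu_homog R (b (+) c) N.
have Uw : U (sup_add x (sup_act (sup_act v s) u)) := U_act Ux fw fu qu hw hu.
have k1 := Key Ux fw fu qu Uw.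
have fsu : lam_fin (lam_mul s u).
  by have [N' h'] := fu; exists (maxn Ns N'); apply: bnd_lmul.
have qsu := qdiv_lmul s qu.
rewrite act_assoc in Uw.
have k2 := Key Ux fv' fsu qsu Uw.
rewrite act_assoc k2 -act_assoc in k1.
have hY : sup_act Y u = zl.
  rewrite /Y act_subl k1; apply: funext => I; rewrite /sup_sub /zl subrr //.
have := uu_cancel hN (leqnn N) hY; rewrite /Y => h.
apply: funext => I; have := pw I h; rewrite /sup_sub /zl => /eqP; rewrite subr_eq0 => /eqP.
by [].
Qed.

Definition FF1 (p : ({fset nat} -> E) * ({fset nat} -> E)) : {fset nat} -> F :=
  sup_add (LL p.1 (ev p.2)) (LL p.1 (od p.2)).

Lemma fin_ev (a : {fset nat} -> E) : sup_fin a -> sup_fin (ev a).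
Proof. by case=> N h; exists N; apply: bnd_ev. Qed.
Lemma fin_od (a : {fset nat} -> E) : sup_fin a -> sup_fin (od a).
Proof. by case=> N h; exists N; apply: bnd_od. Qed.
Lemma fin_add (M : lmodType R) (a b : {fset nat} -> M) : sup_fin a -> sup_fin b -> sup_fin (sup_add a b).
Proof. by case=> N h [N' h']; exists (maxn N N'); apply: bnd_add. Qed.
Lemma fin_act (M : lmodType R) (a : {fset nat} -> M) t : sup_fin a -> lam_fin t -> sup_fin (sup_act a t).
Proof. by case=> N h [N' h']; exists (maxn N N'); apply: bnd_act. Qed.
Lemma lfin_lev (t : {fset nat} -> R) : lam_fin t -> lam_fin (lev t).
Proof. by case=> N h; exists N; apply: bnd_lev. Qed.
Lemma lfin_lod (t : {fset nat} -> R) : lam_fin t -> lam_fin (lod t).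
Proof. by case=> N h; exists N; apply: bnd_lod. Qed.

Lemma FF1_fin x a : U x -> sup_fin a -> sup_fin (FF1 (x, a)).
Proof. by move=> Ux fa; apply: fin_add; apply: LL_fin => //; [apply: fin_ev | apply: fin_od]. Qed.

Lemma FF1_even_eq x a : U x -> sup_even a -> FF1 (x, a) = LL x a.
Proof.
move=> Ux /even_homog ha; rewrite /FF1 /= ev_id // od0 // LL0 // add_zl //.
Qed.

Lemma FF1_even x a : U x -> sup_fin a -> sup_even a -> sup_even (FF1 (x, a)).
Proof.
move=> Ux fa ea; rewrite FF1_even_eq //; apply/even_homog; apply: LL_homog => //.
exact/even_homog.
Qed.

Lemma sadd_ACA (V : lmodType R) (a b c d : {fset nat} -> V) :
  sup_add (sup_add a b) (sup_add c d) = sup_add (sup_add a c) (sup_add b d).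
Proof. by apply: funext => I; rewrite /sup_add addrACA. Qed.

Lemma FF1_add x a b : U x -> sup_fin a -> sup_fin b ->
  FF1 (x, sup_add a b) = sup_add (FF1 (x, a)) (FF1 (x, b)).
Proof.
move=> Ux fa fb; rewrite /FF1 /= ev_add od_add.
rewrite (LL_add Ux (fin_ev fa) (fin_ev fb) (ev_homog _) (ev_homog _)).
rewrite (LL_add Ux (fin_od fa) (fin_od fb) (od_homog _) (od_homog _)).
exact: sadd_ACA.
Qed.

Lemma FF1_lin x a (t : {fset nat} -> R) : U x -> sup_fin a -> lam_fin t ->
  FF1 (x, sup_act a t) = sup_act (FF1 (x, a)) t.
Proof.
move=> Ux fa ft.
set A0 := ev a; set A1 := od a; set T0 := lev t; set T1 := lod t.
have fA0 : sup_fin A0 := fin_ev fa. have fA1 : sup_fin A1 := fin_od fa.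
have fT0 : lam_fin T0 := lfin_lev ft. have fT1 : lam_fin T1 := lfin_lod ft.
have hA0 : homog false A0 := ev_homog _. have hA1 : homog true A1 := od_homog _.
have hT0 : lhomog false T0 := lev_homog _. have hT1 : lhomog true T1 := lod_homog _.
have dec : sup_act a t = sup_add (sup_add (sup_act A0 T0) (sup_act A1 T1))
                                 (sup_add (sup_act A0 T1) (sup_act A1 T0)).
  rewrite -{1}(ev_od a) -{1}(lev_lod t) -/A0 -/A1 -/T0 -/T1 act_addl !act_addr.
  apply: funext => I; rewrite /sup_add [RHS]addrACA.
  by rewrite (addrC (sup_act A1 T0 I)).
have h00 := act_homog hA0 hT0; have h11 := act_homog hA1 hT1.
have h01 := act_homog hA0 hT1; have h10 := act_homog hA1 hT0.
rewrite /= in h00 h11 h01 h10.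
rewrite /FF1 /= dec !ev_add !od_add (ev_id h00) (ev_id h11) (ev0 h01) (ev0 h10) -/A0 -/A1.
rewrite (od0 h00) (od0 h11) (od_id h01) (od_id h10) !add_zl.
have zla : forall V : lmodType R, forall y : {fset nat} -> V, sup_add zl y = y.
  by move=> V y; apply: funext => I; rewrite /sup_add /zl add0r.
rewrite !zla.
rewrite (LL_add Ux (fin_act fA0 fT0) (fin_act fA1 fT1) h00 h11).
rewrite (LL_add Ux (fin_act fA0 fT1) (fin_act fA1 fT0) h01 h10).
rewrite (LL_lin Ux fA0 hA0 fT0 hT0) (LL_lin Ux fA1 hA1 fT1 hT1).
rewrite (LL_lin Ux fA0 hA0 fT1 hT1) (LL_lin Ux fA1 hA1 fT0 hT0).
rewrite -(lev_lod t) -/T0 -/T1 act_addl !act_addr.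
apply: funext => I; rewrite /sup_add addrACA.
by rewrite (addrC (sup_act (LL x A1) T1 I)).
Qed.

Lemma FF1_diff x p a : U x -> sup_fin a -> sup_even a ->
  (exists2 b, sup_fin b & a = sup_act b (theta R p)) ->
  sup_sub (f (sup_add x a)) (f x) = FF1 (x, a).
Proof.
move=> Ux fa ea [b fb ab]; rewrite FF1_even_eq //.
have fth : lam_fin (theta R p) by exists p.+1; apply: bnd_theta.
have h1 := act_homog (ev_homog b) (lhomog_theta R p).
have h2 := act_homog (od_homog b) (lhomog_theta R p).
rewrite /= in h1 h2.
have ab' : a = sup_act (od b) (theta R p).
  have := ev_od b; move=> eb; rewrite -eb act_addl in ab.
  have : od a = zl by apply: od0; apply/even_homog.
  rewrite ab od_add (od_id h1) (od0 h2) add_zl => e0.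
  by rewrite e0; apply: funext => I; rewrite /sup_add /zl add0r.
rewrite ab' (LL_lin Ux (fin_od fb) (od_homog b) fth (lhomog_theta R p)).
apply: Key => //; first exact: fin_od.
  exact: theta_qdiv.
apply: (U_act Ux (fin_od fb) fth _ (od_homog b) (lhomog_theta R p)); exact: theta_qdiv.
Qed.

Definition embl (t : R) : {fset nat} -> R := fun I => if I == fset0 then t else 0.

Lemma emb_ground (M : lmodType R) (e : M) : sup_ground (sup_emb e).
Proof. by move=> I /negbTE h; rewrite /sup_emb h. Qed.
Lemma emb_fin (M : lmodType R) (e : M) : sup_fin (sup_emb e).
Proof. by exists 0 => I [i iI _]; rewrite /sup_emb; case: eqP => // E0'; move: iI; rewrite E0' inE. Qed.
Lemma embl_fin t : lam_fin (embl t).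
Proof. by exists 0 => I [i iI _]; rewrite /embl; case: eqP => // E0'; move: iI; rewrite E0' inE. Qed.

Lemma emb_act (M : lmodType R) (e : M) (t : R) : sup_act (sup_emb e) (embl t) = sup_emb (t *: e).
Proof.
apply: funext => K; rewrite /sup_act /sup_emb.
case: (eqVneq K fset0) => [->|nK].
  rewrite fpowerset0 big_seq_fset1 eqxx fsetD0 /embl eqxx inv_count0l expr0 mul1r.
  by [].
rewrite big1_fset // => I _ _; case: (eqVneq I fset0) => [->|nI]; last by rewrite scaler0.
by rewrite fsetD0 /embl (negbTE nK) mulr0 scale0r.
Qed.

Lemma emb_add (M : lmodType R) (e e' : M) : sup_add (sup_emb e) (sup_emb e') = sup_emb (e + e').
Proof. by apply: funext => I; rewrite /sup_add /sup_emb; case: eqP => _; rewrite ?addr0. Qed.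

Lemma ground_emb (M : lmodType R) (y : {fset nat} -> M) : sup_ground y -> y = sup_emb (sup_body y).
Proof.
move=> h; apply: funext => I; rewrite /sup_emb /sup_body.
by case: (eqVneq I fset0) => [->|nI] //; apply: h.
Qed.

Lemma embl0 : embl 0 = zl.
Proof. by apply: funext => I; rewrite /embl /zl; case: ifP. Qed.

Lemma emb_homog (e : E0) : homog false (sup_emb ((e, 0) : E)).
Proof.
move=> I; rewrite addbF /sup_emb; case: (eqVneq I fset0) => [->|nI].
  by rewrite cardfs0.
by case: ifP.
Qed.

Definition hh1 (y : E0 * E0 * R) : F :=
  sup_body (g1 (sup_emb ((y.1.1, 0) : E), sup_emb ((y.1.2, 0) : E), embl y.2)).

Lemma FF1_emb (x v : E0) : U (sup_emb ((x, 0) : E)) ->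
  FF1 (sup_emb ((x, 0) : E), sup_emb ((v, 0) : E)) = sup_emb (hh1 (x, v, 0)).
Proof.
move=> Ux; rewrite FF1_even_eq //; last by apply/even_homog/emb_homog.
rewrite /hh1 /= embl0 /LL; apply: ground_emb; apply: groundg1.
  exact: V1_zl (emb_fin _).
split; [exact: emb_ground | exact: emb_ground | by move=> I _].
Qed.

Lemma emb_pair (x v : E0) (t : R) : ((x, 0) : E) + t *: ((v, 0) : E) = ((x + t *: v, 0) : E).
Proof. change (((x + t *: v, 0 + t *: (0 : E1)) : E) = ((x + t *: v, 0) : E)). by rewrite scaler0 addr0. Qed.

Lemma V1_emb (x v : E0) (t : R) : U (sup_emb ((x, 0) : E)) -> U (sup_emb ((x + t *: v, 0) : E)) ->
  V1U (sup_emb ((x, 0) : E), sup_emb ((v, 0) : E), embl t).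
Proof.
move=> Ux Uxt; split => //; [exact: emb_fin | exact: embl_fin |].
by rewrite /= emb_act emb_add emb_pair.
Qed.

Lemma hh1_eq (x v : E0) (t : R) : U (sup_emb ((x, 0) : E)) -> U (sup_emb ((x + t *: v, 0) : E)) ->
  sup_body (f (sup_emb ((x + t *: v, 0) : E))) - sup_body (f (sup_emb ((x, 0) : E))) = t *: hh1 (x, v, t).
Proof.
move=> Ux Uxt; have h := eq1 (V1_emb Ux Uxt).
rewrite /= emb_act emb_add emb_pair in h.
have := pw fset0 h; rewrite /sup_sub /sup_body => ->.
rewrite /sup_act fpowerset0 big_seq_fset1 fsetD0 /embl eqxx inv_count0l expr0 mul1r.
by [].
Qed.

Hypothesis contf : @DeWitt_continuous R (sspE E) F U f.
Hypothesis contg1 : @DeWitt_continuous R (sspP3 (sspE E)) F V1U g1.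
Hypothesis addF : continuous (fun p : F * F => p.1 + p.2).

Definition phiR (e : E0) : initial_topology (@sbody R (sspE E)) := sup_emb ((e, 0) : E).

Lemma cont_phiR : continuous phiR.
Proof.
apply: continuous_comp_initial.
have -> : (@sbody R (sspE E)) \o phiR = (fun e : E0 => ((e, 0) : E)).
  by apply: funext => e; rewrite /= /phiR /sup_body /sup_emb eqxx.
by apply: cont_pair; [exact: cont_id | exact: cont_cst].
Qed.

Lemma cont_fR : {within [set e : E0 | U (sup_emb ((e, 0) : E))],
  continuous (fun e : E0 => sup_body (f (sup_emb ((e, 0) : E))))}.
Proof.
have c := within_comp (A := [set e : E0 | U (sup_emb ((e, 0) : E))]) cont_phiR (fun e h => h) contf.
exact: (within_initial_out c).
Qed.

Definition psi (y : E0 * E0 * R) : initial_topology (@sbody R (sspP3 (sspE E))) :=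
  (sup_emb ((y.1.1, 0) : E), sup_emb ((y.1.2, 0) : E), embl y.2).

Lemma cont_psi : continuous psi.
Proof.
apply: continuous_comp_initial.
have -> : (@sbody R (sspP3 (sspE E))) \o psi =
   (fun y : E0 * E0 * R => (((y.1.1, 0) : E), ((y.1.2, 0) : E), y.2)).
  by apply: funext => y; rewrite /= /psi /sup_body /sup_emb /embl eqxx.
apply: cont_pair; last exact: cont_comp (@cont_snd _ _) (@cont_id _).
apply: cont_pair; apply: cont_pair; try exact: cont_cst.
  exact: cont_comp (@cont_fst _ _) (@cont_fst _ _).
exact: cont_comp (@cont_fst _ _) (@cont_snd _ _).
Qed.

Lemma cont_hh1 : {within [set y : E0 * E0 * R | U (sup_emb ((y.1.1, 0) : E)) /\
     U (sup_emb ((y.1.1 + y.2 *: y.1.2, 0) : E))], continuous hh1}.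
Proof.
have c := within_comp (A := [set y : E0 * E0 * R | U (sup_emb ((y.1.1, 0) : E)) /\
     U (sup_emb ((y.1.1 + y.2 *: y.1.2, 0) : E))]) cont_psi
   (fun y h => V1_emb h.1 h.2) contg1.
exact: (within_initial_out c).
Qed.

Definition chi (b : bool) (p : initial_topology (@dwbody R E) * initial_topology (@dwbody R E)) :
  initial_topology (@sbody R (sspP3 (sspE E))) := (p.1, (if b then od p.2 else ev p.2), zl).

Lemma cont_dw : continuous (@dwbody R E : initial_topology (@dwbody R E) -> E).
Proof. exact: initial_continuous. Qed.

Lemma cont_chi b : continuous (chi b).
Proof.
apply: continuous_comp_initial.
have -> : (@sbody R (sspP3 (sspE E))) \o chi b =
   (fun p : initial_topology (@dwbody R E) * initial_topology (@dwbody R E) =>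
     (dwbody p.1, (if b then ((0, (dwbody p.2).2) : E) else (((dwbody p.2).1, 0) : E)), (0 : R))).
  by apply: funext => p; case: b.
apply: cont_pair; first apply: cont_pair.
- exact: cont_comp (@cont_fst _ _) cont_dw.
- case: b.
    apply: cont_pair; first exact: cont_cst.
    exact: cont_comp (cont_comp (@cont_snd _ _) cont_dw) (@cont_snd _ _).
  apply: cont_pair; last exact: cont_cst.
  exact: cont_comp (cont_comp (@cont_snd _ _) cont_dw) (@cont_fst _ _).
- exact: cont_cst.
Qed.

Lemma cont_FF1 : DeWitt_continuous2 [set p | U p.1 /\ sup_fin p.2] FF1.
Proof.
apply: within_initial_in.
have mp : forall b, forall p : initial_topology (@dwbody R E) * initial_topology (@dwbody R E),
   [set p | U p.1 /\ sup_fin p.2] p -> V1U (chi b p).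
  move=> b p [Up fp]; rewrite /chi; apply: V1_zl => //; case: b.
    exact: fin_od. exact: fin_ev.
have c0 := within_initial_out (within_comp (@cont_chi false) (mp false) contg1).
have c1 := within_initial_out (within_comp (@cont_chi true) (mp true) contg1).
exact: (within_op addF c0 c1).
Qed.

Lemma core : exists h1 : E0 * E0 * R -> F,
    BGN_C1_with [set e : E0 | U (sup_emb ((e, 0) : E))]
      (fun e : E0 => sup_body (f (sup_emb ((e, 0) : E)))) h1 /\
    exists f1 : ({fset nat} -> E) * ({fset nat} -> E) -> {fset nat} -> F,
      [/\ (forall x v : E0, U (sup_emb ((x, 0) : E)) ->
             f1 (sup_emb ((x, 0) : E), sup_emb ((v, 0) : E)) = sup_emb (h1 (x, v, 0))),
          @DeWitt_continuous2 R E F [set p | U p.1 /\ sup_fin p.2] f1,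
          (forall x, U x ->
             [/\ (forall a, sup_fin a -> sup_fin (f1 (x, a))),
                 (forall a, sup_fin a -> sup_even a -> sup_even (f1 (x, a))),
                 (forall a b, sup_fin a -> sup_fin b ->
                   f1 (x, sup_add a b) = sup_add (f1 (x, a)) (f1 (x, b))) &
                 (forall a t, sup_fin a -> lam_fin t ->
                   f1 (x, sup_act a t) = sup_act (f1 (x, a)) t)]) &
          (forall x (p : nat) a, U x -> sup_fin a -> sup_even a ->
             (exists2 b, sup_fin b & a = sup_act b (theta R p)) ->
             sup_sub (f (sup_add x a)) (f x) = f1 (x, a))].
Proof.
exists hh1; split.
  split; [exact: cont_fR | exact: cont_hh1 |].
  by move=> x v t Ux Uxt; apply: hh1_eq.
exists FF1; split.
- by move=> x v Ux; apply: FF1_emb.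
- exact: cont_FF1.
- move=> x Ux; split.
  + by move=> a fa; apply: FF1_fin.
  + by move=> a fa ea; apply: FF1_even.
  + by move=> a b fa fb; apply: FF1_add.
  + by move=> a t fa ft; apply: FF1_lin.
- by move=> x p a Ux fa ea hb; apply: FF1_diff hb.
Qed.

End Tuyn.


Unset Implicit Arguments.
Set Strict Implicit.
Set Printing Implicit Defensive.

Theorem proposition4p2 (R : TopComUnitRing.type) (E0 E1 F0 F1 : TopLmod.type R)
  (U : set (Sinf (E0 * E1)%type)) (f : Sinf (E0 * E1)%type -> Sinf (F0 * F1)%type) :
  topological_ring R -> hausdorff_space R -> Q_algebra R -> dense_units R ->
  locally_komega R ->
  topological_module (E0 * E1)%type -> locally_komega (E0 * E1)%type ->
  topological_module (F0 * F1)%type -> locally_komega (F0 * F1)%type ->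
  (* U is a DeWitt-open subset of E_infty *)
  (exists O : set E0, open O /\
     U = [set x | [/\ sup_even x, sup_fin x & O (sup_body x).1]]) ->
  (* f is even *)
  (forall x, U x -> sup_even (f x)) ->
  (* f is Tuynman-C^2 *)
  @TuynmanC R (F0 * F1)%type 2 (sspE (E0 * E1)%type) U f ->
  let UR := [set e : E0 | U (sup_emb (e, 0))] in
  let fR := fun e : E0 => sup_body (f (sup_emb (e, 0))) in
  exists h1 : E0 * E0 * R -> (F0 * F1)%type,
    BGN_C1_with UR fR h1 /\
    exists f1 : Sinf (E0 * E1)%type * Sinf (E0 * E1)%type -> Sinf (F0 * F1)%type,
      [/\ (* f1 extends df_R, where df_R(x)v = h1(x,v,0) *)
          (forall x v : E0, UR x ->
             f1 (sup_emb (x, 0), sup_emb (v, 0)) = sup_emb (h1 (x, v, 0))),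
          (* f1 is DeWitt-continuous on U x E^infty *)
          @DeWitt_continuous2 R (E0 * E1)%type (F0 * F1)%type
            [set p | U p.1 /\ sup_fin p.2] f1,
          (* for x in U, f1(x) is even and lambda^infty-linear *)
          (forall x, U x ->
             [/\ (forall a, sup_fin a -> sup_fin (f1 (x, a))),
                 (forall a, sup_fin a -> sup_even a -> sup_even (f1 (x, a))),
                 (forall a b, sup_fin a -> sup_fin b ->
                   f1 (x, sup_add a b) = sup_add (f1 (x, a)) (f1 (x, b))) &
                 (forall a t, sup_fin a -> lam_fin t ->
                   f1 (x, sup_act a t) = sup_act (f1 (x, a)) t)]) &
          (* f(x+a) - f(x) = f1(x)(a) for a in E(lambda^infty theta_p) *)
          (forall x (p : nat) a, U x -> sup_fin a -> sup_even a ->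
             (exists2 b, sup_fin b & a = sup_act b (theta R p)) ->
             sup_sub (f (sup_add x a)) (f x) = f1 (x, a))].
Proof.
move=> TR HR QR DU KR TE KE TF KF [O [Oo HU]] fev HT UR fR.
case: HT => finf groundf contf [g1 [eq1 [fing1 groundg1 contg1 [g2 [eq2 _]]]]].
case: TF => addF _ _.
exact: (core HU fev eq1 groundg1 fing1 eq2 contf contg1 addF).
Qed.
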